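(* The clone $\mathscr{C}_{I_{\bar d=0}}$ is a Borel subset of $\mathscr{O}$.
   Context: Let $\mathbb{N}=\{0,1,2,\dots\}$, $\mathscr{O}^{(n)}=\mathbb{N}^{\mathbb{N}^n}$ for $n\ge1$, and $\mathscr{O}=\bigcup_{n\ge1}\mathscr{O}^{(n)}$, where each $\mathscr{O}^{(n)}$ carries the product topology of the discrete topology on $\mathbb{N}$ and $\mathscr{O}$ carries the sum topology (a Polish space). For $A\subseteq\mathbb{N}$ the upper density is $\bar d(A)=\limsup_{n\to\infty}\frac{|A\cap[0,n)|}{n}$. Let $I_{\bar d=0}$ be the ideal of subsets of $\mathbb{N}$ of upper density $0$, and let $\mathscr{C}_{I_{\bar d=0}}$ be the set of all $f\in\mathscr{O}$, say $f$ $k$-ary, such that $f[A^k]\in I_{\bar d=0}$ for every $A\in I_{\bar d=0}$. *)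

(* Defs.v *)
From HB Require Import structures.
From mathcomp Require Import all_boot all_order all_algebra.
From mathcomp Require Import boolp classical_sets reals sequences measure.
From mathcomp Require Import Rstruct.
Set Implicit Arguments. Unset Strict Implicit. Unset Printing Implicit Defensive.
Import Order.TTheory GRing.Theory Num.Theory.
Local Open Scope classical_set_scope.
Local Open Scope ring_scope.

Definition Rr : realType := Rdefinitions.R.

Definition upper_density (A : set nat) : Rr :=
  limn_sup (fun n : nat => (\sum_(i < n) ((i : nat) \in A)%:R) / n%:R : Rr).

Definition Idens0 : set (set nat) := [set A | upper_density A = 0].

(* O^(k+1) = N^(N^(k+1)); k-ary operations for k >= 1 are indexed by k.-1 *)
Definition Ops (k : nat) := (k.+1).-tuple nat -> nat.
Definition Op := {k : nat & Ops k}.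

Definition arity (F : Op) : nat := (projT1 F).+1.

(* product topology of discrete N on X -> N: basic neighbourhoods fix
   finitely many coordinates *)
Definition prod_open (X : Type) (U : set (X -> nat)) : Prop :=
  forall f, U f -> exists F : list X,
    forall g, (forall x, List.In x F -> g x = f x) -> U g.

(* sum topology on O *)
Definition O_open (U : set Op) : Prop :=
  forall k, prod_open (fun f : Ops k => U (existT _ k f)).

Definition O_Borel (B : set Op) : Prop := <<s O_open >> B.

Definition op_image (F : Op) (A : set nat) : set nat :=
  [set projT2 F t | t in [set t : (projT1 F).+1.-tuple nat | forall i, A (tnth t i)]].

Definition C_Idens0 : set Op :=
  [set F | forall A, Idens0 A -> Idens0 (op_image F A)].

(* Main.v *)
Require Import Defs.
From HB Require Import structures.
From mathcomp Require Import all_boot all_order all_algebra.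
From mathcomp Require Import boolp classical_sets reals sequences measure normedtype.
From mathcomp Require Import Rstruct zify.
Import Order.TTheory GRing.Theory Num.Theory.
Local Open Scope classical_set_scope.

Section Analytic.
Local Open Scope ring_scope.
Definition cnt (S : set nat) (m : nat) : nat := (\sum_(i < m) ((i : nat) \in S))%N.

Lemma cnt_le S m : (cnt S m <= m)%N.
Proof.
rewrite /cnt -[X in (_ <= X)%N]card_ord -sum1_card.
by apply: leq_sum => i _; case: (_ \in _).
Qed.

Lemma lt_inv_nat (a m q : nat) : (0 < m)%N ->
  (a%:R / m%:R < (q.+1)%:R^-1 :> Rr) -> (q.+1 * a < m)%N.
Proof.
move=> m0 h.
have hm : (0 : Rr) < m%:R by rewrite ltr0n.
have hq : (0 : Rr) < q.+1%:R by rewrite ltr0n.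
rewrite -(ltr_nat Rr) natrM.
rewrite ltr_pdivrMr // in h.
rewrite mulrC -ltr_pdivlMr //.
by rewrite mulrC.
Qed.

Lemma le_inv_nat (a m q : nat) : (0 < m)%N ->
  (q.+1 * a <= m)%N -> (a%:R / m%:R <= (q.+1)%:R^-1 :> Rr).
Proof.
move=> m0 h.
have hm : (0 : Rr) < m%:R by rewrite ltr0n.
have hq : (0 : Rr) < q.+1%:R by rewrite ltr0n.
by rewrite ler_pdivrMr // ler_pdivlMl // -natrM ler_nat.
Qed.

Lemma udE A : upper_density A = limn_sup (fun n => ((cnt A n)%:R / n%:R : Rr)).
Proof.
rewrite /upper_density; congr limn_sup; apply: funext => n.
by rewrite /cnt natr_sum.
Qed.

Lemma bnd01 (u : nat -> Rr^o) : (forall n, 0 <= u n <= 1) -> bounded_fun u.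
Proof.
move=> h. rewrite /=. exists 1; split => // M M1 x _.
have /andP[h0 h1] := h x.
rewrite /= ger0_norm //. apply: (le_trans h1). exact: ltW.
Qed.

Lemma ud0P A : upper_density A = 0 <->
  forall q, exists N, forall m, (N <= m)%N -> (q.+1 * cnt A m <= m)%N.
Proof.
set u : nat -> Rr^o := fun n => ((cnt A n)%:R / n%:R : Rr).
have u01 n : 0 <= u n <= 1.
  rewrite /u; case: n => [|n]; first by rewrite invr0 mulr0 lexx ler01.
  rewrite divr_ge0 ?ler0n //= ler_pdivrMr ?ltr0n // mul1r ler_nat.
  exact: cnt_le.
have ub n : has_ubound (sdrop u n).
  by exists 1 => _ [k _ <-]; case/andP: (u01 k).
have ne n : sdrop u n !=set0 by exists (u n); exists n => /=.
have usup n m : (n <= m)%N -> u m <= sups u n.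
  by move=> nm; apply: ub_le_sup => //; exists m.
have lb : has_lbound (range (sups u)).
  by exists 0 => _ [n _ <-]; apply: le_trans (usup n n (leqnn n)); case/andP: (u01 n).
rewrite udE -/u limn_supE; last exact: bnd01.
split.
- move=> h q.
  have : inf (range (sups u)) < (q.+1%:R)^-1 by rewrite h invr_gt0 ltr0n.
  case/inf_lt; first by exists (sups u 0); exists 0.
  move=> _ [N _ <-] hN; exists N => m Nm.
  case: m Nm => [|m] Nm; first by rewrite /cnt big_ord0 muln0.
  apply: ltnW; apply: lt_inv_nat => //.
  exact: le_lt_trans (usup _ _ Nm) hN.
- move=> h; apply/eqP; rewrite eq_le; apply/andP; split; last first.
    apply: lb_le_inf; first by exists (sups u 0); exists 0.
    by move=> _ [n _ <-]; apply: le_trans (usup n n (leqnn n)); case/andP: (u01 n).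
  apply/ler_addgt0Pr => e e0; rewrite add0r.
  have [q hq] : exists q : nat, (q.+1%:R)^-1 < e.
    exists (Num.Def.archi_bound e^-1).
    rewrite -[_^-1]mul1r ltr_pdivrMr ?ltr0n // -ltr_pdivrMl // mulr1.
    apply: lt_le_trans (archi_boundP _) _; first by rewrite invr_ge0 ltW.
    by rewrite ler_nat.
  have [N hN] := h q.
  apply: le_trans (ltW hq).
  apply: le_trans (ge_inf lb _) _; first by exists N.
  apply: sup_le_ub => //.
  move=> _ [m /= Nm <-]; rewrite /u.
  case: m Nm => [|m] Nm; first by rewrite invr0 mulr0 invr_ge0 ler0n.
  by apply: le_inv_nat => //; apply: hN.
Qed.
End Analytic.
Lemma cntS S m : cnt S m.+1 = (cnt S m + (m \in S))%N.
Proof. by rewrite /cnt big_ord_recr. Qed.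

Lemma cnt_sub S T m : S `<=` T -> (cnt S m <= cnt T m)%N.
Proof.
move=> ST; apply: leq_sum => i _.
case: (boolP (_ \in S)) => // /set_mem/ST/mem_set ->; done.
Qed.

Lemma img_sub F X Y : X `<=` Y -> op_image F X `<=` op_image F Y.
Proof. by move=> XY _ [t ht <-]; exists t => // i; apply: XY. Qed.

Lemma BorO U : O_open U -> O_Borel U.
Proof. exact: sub_sigma_algebra. Qed.

Lemma BorC U : O_Borel U -> O_Borel (~` U).
Proof. by move=> /sigma_algebraCD; rewrite setTD. Qed.

Lemma BorU (F : nat -> set Op) : (forall n, O_Borel (F n)) -> O_Borel (\bigcup_n F n).
Proof. exact: sigma_algebra_bigcup. Qed.

Lemma BorI (F : nat -> set Op) : (forall n, O_Borel (F n)) -> O_Borel (\bigcap_n F n).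
Proof.
move=> h; rewrite -[X in O_Borel X]setCK setC_bigcap.
by apply: BorC; apply: BorU => n; apply: BorC.
Qed.

Lemma Bor0 : O_Borel set0.
Proof. exact: sigma_algebra0. Qed.

Lemma cnt_local k (f : Ops k) X m : exists L : list ((k.+1).-tuple nat),
  forall g, (forall t, List.In t L -> g t = f t) ->
  (cnt (op_image (existT _ k f) X) m <= cnt (op_image (existT _ k g) X) m)%N.
Proof.
elim: m => [|m [L IH]]; first by exists nil => g _; rewrite /cnt big_ord0.
case: (boolP (m \in op_image (existT _ k f) X)) => [hm|nm].
- have [t ht ft] := set_mem hm.
  exists (t :: L) => g hg; rewrite !cntS hm.
  have -> : m \in op_image (existT _ k g) X.
    apply: mem_set; exists t => //=; rewrite hg //=; by left.
  rewrite leq_add2r; apply: IH => t' ht'; apply: hg; by right.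
- exists L => g hg; rewrite !cntS (negbTE nm) addn0.
  exact: leq_trans (IH g hg) (leq_addr _ _).
Qed.

Lemma E_open (X : set nat) (m : nat) (P : nat -> Prop) :
  (forall x y, (x <= y)%N -> P x -> P y) ->
  O_open [set F | P (cnt (op_image F X) m)].
Proof.
move=> Pm k f /= hf.
have [L hL] := @cnt_local k f X m.
exists L => g hg; exact: Pm _ _ (hL g hg) hf.
Qed.

Definition fs (n : nat) : set nat :=
  if @unpickle (seq nat) n is Some s then [set x | x \in s] else set0.

Lemma fs_pickle (s : seq nat) : fs (pickle s) = [set x | x \in s].
Proof. by rewrite /fs pickleK. Qed.

Definition sparse j (P : set nat) := forall m, (2^j * cnt P m <= m)%N.

Definition Gq q a F := forall j N, exists p m,
  [/\ (N <= m)%N, sparse j (fs p) & (m < q.+1 * cnt (op_image F (fs a `|` fs p)) m)%N].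

Definition Bad F := exists q a, Gq q a F.

Lemma Bad_Borel : O_Borel [set F | Bad F].
Proof.
have -> : [set F | Bad F] = \bigcup_q \bigcup_a \bigcap_j \bigcap_N \bigcup_p \bigcup_m
   [set F | [/\ (N <= m)%N, sparse j (fs p) &
       (m < q.+1 * cnt (op_image F (fs a `|` fs p)) m)%N]].
  apply/seteqP; split => F.
  - move=> [q [a h]]; exists q => //; exists a => // j _ N _.
    by have [p [m hpm]] := h j N; exists p => //; exists m.
  - move=> [q _ [a _ h]]; exists q, a => j N.
    by have [p _ [m _ hpm]] := h j I N I; exists p, m.
apply: BorU => q; apply: BorU => a; apply: BorI => j; apply: BorI => N.
apply: BorU => p; apply: BorU => m.
have [[h1 h2]|h] := pselect ((N <= m)%N /\ sparse j (fs p)).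
- apply: BorO.
  have -> : [set F | [/\ (N <= m)%N, sparse j (fs p) &
       (m < q.+1 * cnt (op_image F (fs a `|` fs p)) m)%N]] =
       [set F | (fun x => (m < q.+1 * x)%N) (cnt (op_image F (fs a `|` fs p)) m)].
    apply/seteqP; split => F /=; first by case.
    by move=> hF; split.
  apply: (@E_open (fs a `|` fs p) m (fun x => (m < q.+1 * x)%N)).
  move=> x y xy hx; apply: leq_trans hx _; exact: leq_mul.
- have -> : [set F | [/\ (N <= m)%N, sparse j (fs p) &
       (m < q.+1 * cnt (op_image F (fs a `|` fs p)) m)%N]] = set0.
    by apply/seteqP; split => F //= [h1 h2 _]; apply: h.
  exact: Bor0.
Qed.
Lemma geom (x : nat -> nat) m J L : (forall j, 2^j * x j <= m)%N ->
  (2^(J+L) * (\sum_(J <= j < J+L) x j) + 2 * m <= 2^L.+1 * m)%N.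
Proof.
move=> hx; elim: L => [|L IH]; first by rewrite addn0 big_geq // muln0 add0n expn1.
rewrite addnS big_nat_recr ?leq_addr //=.
have := hx (J+L).
rewrite !expnS.
set a := 2^(J+L). set S := \sum_(J <= j < J+L) x j. set c := 2^L.
move: IH; rewrite -/a -/S expnS -/c => IH h.
nia.
Qed.

Lemma cnt_pos X m i : (i < m)%N -> X i -> (0 < cnt X m)%N.
Proof.
move=> im Xi; rewrite /cnt (bigD1 (Ordinal im)) //= (mem_set Xi).
by rewrite add1n.
Qed.

Definition sz (p : nat) : nat := if @unpickle (seq nat) p is Some s then size s else 0.

Lemma mem_seqset (s : seq nat) i : (i \in [set x | x \in s]) = (i \in s).
Proof. by apply/idP/idP => [/set_mem|/mem_set]. Qed.

Lemma cnt_fs_le p m : (cnt (fs p) m <= sz p)%N.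
Proof.
rewrite /cnt /fs /sz; case: (unpickle p) => [s|]; last first.
  by rewrite big1 // => i _; rewrite in_set0.
under eq_bigr do rewrite mem_seqset.
rewrite -(big_mkord xpredT (fun i => (i \in s) : nat)).
have -> : (\sum_(0 <= i < m) (i \in s) = count (mem s) (iota 0 m))%N.
  rewrite /index_iota subn0 -sum1_count [RHS]big_mkcond /=.
  by apply: eq_bigr => i _; case: (i \in s).
rewrite -size_filter; apply: uniq_leq_size; first exact/filter_uniq/iota_uniq.
by move=> x; rewrite mem_filter => /andP[].
Qed.

Lemma sum_split (x : nat -> nat) J m : (J <= m)%N ->
  (\sum_(j < m) x j = \sum_(j < J) x j + \sum_(J <= j < m) x j)%N.
Proof.
move=> Jm.
rewrite -!(big_mkord (fun _ => true)).
by rewrite (big_cat_nat (n:=J)).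
Qed.

Lemma cnt_union_bound (a : nat) (P : nat -> set nat) m :
  (forall j, sparse j (P j)) ->
  (cnt (fs a `|` \bigcup_j P j) m <= cnt (fs a) m + \sum_(j < m) cnt (P j) m)%N.
Proof.
move=> sp; rewrite /cnt exchange_big /= -big_split /=; apply: leq_sum => i _.
case: (boolP ((i : nat) \in fs a `|` \bigcup_j P j)) => [/set_mem [Ha|[j _ Pj]]|//].
- by rewrite (mem_set Ha); exact: leq_addr.
- have jm : (j < m)%N.
    rewrite ltnNge; apply/negP => mj.
    have := sp j m; have := @cnt_pos _ _ _ (ltn_ord i) Pj.
    move=> c0 h.
    have : (2^j <= m)%N by apply: leq_trans h; rewrite leq_pmulr.
    have : (m < 2^j)%N.
      apply: leq_trans (ltn_expl m (ltnSn 1)) _.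
      by rewrite leq_pexp2l.
    lia.
  rewrite (bigD1 (Ordinal jm)) //= (mem_set Pj).
  lia.
Qed.

Lemma BadNC F : Bad F -> ~ C_Idens0 F.
Proof.
move=> [q [a G]] hC.
have : forall j, exists pm : nat * nat, [/\ (j <= pm.2)%N, sparse j (fs pm.1) &
    (pm.2 < q.+1 * cnt (op_image F (fs a `|` fs pm.1)) pm.2)%N].
  by move=> j; have [p [m h]] := G j j; exists (p, m).
case/choice => pm hpm.
pose A := fs a `|` \bigcup_j fs (pm j).1.
have sp j : sparse j (fs (pm j).1) by case: (hpm j).
have dA : Idens0 A.
  rewrite /Idens0 /=; apply/ud0P => r.
  pose J := r.+2.
  pose K0 := (sz a + \sum_(j < J) sz (pm j).1)%N.
  exists (maxn J (2 * (r.+1 * K0))) => m.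
  rewrite geq_max => /andP[Jm Km].
  have h1 := @cnt_union_bound a (fun j => fs (pm j).1) m sp.
  set T := (\sum_(J <= j < m) cnt (fs (pm j).1) m)%N.
  have h2 : (\sum_(j < m) cnt (fs (pm j).1) m =
       \sum_(j < J) cnt (fs (pm j).1) m + T)%N.
    exact: sum_split.
  have h3 : (\sum_(j < J) cnt (fs (pm j).1) m <= \sum_(j < J) sz (pm j).1)%N.
    by apply: leq_sum => j _; apply: cnt_fs_le.
  have h4 := cnt_fs_le a m.
  have h5 : (2^J * T <= 2 * m)%N.
    have := @geom (fun j => cnt (fs (pm j).1) m) m J (m - J) (fun j => sp j m).
    rewrite expnS expnD subnKC // -/T => h.
    rewrite -(@leq_pmul2l (2^(m-J))) ?expn_gt0 //.
    lia.
  have h6 : (4 * r.+1 <= 2^J)%N.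
    rewrite /J !expnS mulnA.
    by rewrite leq_pmul2l //; exact: ltn_expl.
  have h7 : (4 * r.+1 * T <= 2 * m)%N.
    by apply: leq_trans h5; rewrite leq_mul2r h6 orbT.
  have h8 : (r.+1 * cnt A m <= r.+1 * (K0 + T))%N.
    rewrite leq_mul2l; apply/orP; right.
    have h1' : (cnt A m <= cnt (fs a) m + (\sum_(j<J) cnt (fs (pm j).1) m + T))%N.
      by rewrite -h2.
    rewrite /K0; lia.
  nia.
have := hC A dA.
rewrite /Idens0 /= ud0P => /(_ q) [N hN].
case: (hpm N) => h1 _ h3.
have := hN _ h1.
have : (cnt (op_image F (fs a `|` fs (pm N).1)) (pm N).2 <= cnt (op_image F A) (pm N).2)%N.
  apply/cnt_sub/img_sub => x [Hx|Hx]; [by left|by right; exists N].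
nia.
Qed.

Lemma cnt_low X m : (forall x, X x -> (m <= x)%N) -> cnt X m = 0%N.
Proof.
move=> h; rewrite /cnt big1 // => i _.
by rewrite memNset // => /h; rewrite leqNgt ltn_ord.
Qed.

Lemma fin_wit (F : Op) (X T : set nat) m : exists s : seq nat,
  (forall x, x \in s -> T x) /\
  (cnt (op_image F (X `|` T)) m <= cnt (op_image F (X `|` [set x | x \in s])) m)%N.
Proof.
elim: m => [|m [s [sT IH]]]; first by exists [::]; split; [move=> x; rewrite in_nil|rewrite /cnt !big_ord0].
case: (boolP (m \in op_image F (X `|` T))) => [hm|nm].
- have [t ht ft] := set_mem hm.
  pose s' := [seq x <- tval t | `[< T x >]] ++ s.
  have ss' : [set x | x \in s] `<=` [set x | x \in s'].
    by move=> x /= xs; rewrite /s' mem_cat xs orbT.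
  exists s'; split.
    move=> x; rewrite /s' mem_cat mem_filter => /orP[/andP[/asboolP //]|].
    exact: sT.
  rewrite !cntS hm.
  have -> : m \in op_image F (X `|` [set x | x \in s']).
    apply: mem_set; exists t => // i.
    case: (ht i) => [Xi|Ti]; [by left|right].
    by rewrite /= /s' mem_cat mem_filter (asboolT Ti) /= mem_tnth.
  rewrite leq_add2r; apply: leq_trans IH _.
  by apply/cnt_sub/img_sub => x [Xx|Sx]; [left|right; apply: ss'].
- exists s; split => //; rewrite !cntS (negbTE nm) addn0.
  exact: leq_trans IH (leq_addr _ _).
Qed.

Lemma windows (a : nat -> nat) : (forall r, (a r <= a r.+1)%N) ->
  forall x R, (\sum_(r < R) ((a r <= x) && (x < a r.+1)) <= 1)%N.
Proof.
move=> ha x; elim => [|R IH]; first by rewrite big_ord0.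
rewrite big_ord_recr /=.
case: (boolP ((a R <= x) && (x < a R.+1))) => [/andP[h1 h2]|_]; last by rewrite addn0.
rewrite big1 // => r _.
have : (a r.+1 <= a R)%N.
  have hm := @homo_leq _ a (fun x y => (x <= y)%N) leqnn (fun y x z => @leq_trans y x z) ha.
  by apply: hm; exact: ltn_ord.
move=> h; suff -> : ((a r <= x) && (x < a r.+1)) = false by [].
apply/negbTE; rewrite negb_and -leqNgt; apply/orP; right.
exact: leq_trans h h1.
Qed.

Definition Wc (A : set nat) (a : nat -> nat) r :=
  [set x | A x /\ ~~ ((a r <= x) && (x < a r.+1))%N].

Lemma key_pt k (f : Ops k) (A : set nat) (a : nat -> nat) R i :
  (forall r, (a r <= a r.+1)%N) ->
  (R * (i \in op_image (existT _ k f) A) <=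
   \sum_(r < R) (i \in op_image (existT _ k f) (Wc A a r)) +
   k.+1 * (i \in op_image (existT _ k f) A))%N.
Proof.
move=> ha.
case: (boolP (i \in op_image (existT _ k f) A)) => [hi|_]; last by rewrite muln0.
have [t ht ft] := set_mem hi; rewrite !muln1.
have h1 r : (1 <= (i \in op_image (existT _ k f) (Wc A a r)) +
    \sum_(idx < k.+1) ((a r <= tnth t idx) && (tnth t idx < a r.+1)))%N.
  case: (posnP (\sum_(idx < k.+1) ((a r <= tnth t idx) && (tnth t idx < a r.+1)))) => [s0|s0];
    last by rewrite addn_gt0 s0 orbT.
  have -> : i \in op_image (existT _ k f) (Wc A a r).
    apply: mem_set; exists t => // idx; split; first exact: ht.
    move/eqP: s0; rewrite sum_nat_eq0 => /forallP/(_ idx).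
    by case: (_ && _).
  by [].
have h2 : (\sum_(r < R) \sum_(idx < k.+1) ((a r <= tnth t idx) && (tnth t idx < a r.+1))
    <= k.+1)%N.
  rewrite exchange_big /=.
  apply: (@leq_trans (\sum_(j < k.+1) 1)%N); last by rewrite sum_nat_const card_ord muln1.
  by apply: leq_sum => j _; apply: windows.
have h3 : (R <= \sum_(r < R) (i \in op_image (existT _ k f) (Wc A a r)) +
    \sum_(r < R) \sum_(idx < k.+1) ((a r <= tnth t idx) && (tnth t idx < a r.+1)))%N.
  rewrite -big_split /= -[X in (X <= _)%N]card_ord -sum1_card.
  by apply: leq_sum => r _; exact: h1.
lia.
Qed.

Lemma key_sum k (f : Ops k) (A : set nat) (a : nat -> nat) R m :
  (forall r, (a r <= a r.+1)%N) ->
  (R * cnt (op_image (existT _ k f) A) m <=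
   \sum_(r < R) cnt (op_image (existT _ k f) (Wc A a r)) m +
   k.+1 * cnt (op_image (existT _ k f) A) m)%N.
Proof.
move=> ha; rewrite /cnt exchange_big /= !big_distrr -big_split /=.
by apply: leq_sum => i _; apply: key_pt.
Qed.

Lemma NBC F : ~ Bad F -> C_Idens0 F.
Proof.
case: F => k f nB A dA.
rewrite /Idens0 /=; apply/ud0P; apply: contrapT => hn.
set IA := op_image (existT _ k f) A.
have [q0 hq0] : exists q0, forall N, exists m, (N <= m)%N /\ (m < q0.+1 * cnt IA m)%N.
  apply: contrapT => H; apply: hn => q; apply: contrapT => H2; apply: H; exists q => N.
  apply: contrapT => H3; apply: H2; exists N => m Nm; rewrite leqNgt; apply/negP => h.
  by apply: H3; exists m.
pose q := q0.*2.+1.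
have nG a : ~ Gq q a (existT _ k f) by move=> h; apply: nB; exists q, a.
have step b : exists bN : nat * nat, (b <= bN.1)%N /\
    forall T : set nat, T `<=` [set x | A x /\ (bN.1 <= x)%N] ->
    forall m, (bN.2 <= m)%N ->
    (q.+1 * cnt (op_image (existT _ k f) ([set x | A x /\ (x < b)%N] `|` T)) m <= m)%N.
  pose s := [seq x <- iota 0 b | `[< A x >]].
  have fsE : fs (pickle s) = [set x | A x /\ (x < b)%N].
    rewrite fs_pickle; apply/seteqP; split => x /=; rewrite /s mem_filter mem_iota add0n /=.
      by move=> /andP[/asboolP ? ?].
    by move=> [Ax xb]; rewrite (asboolT Ax) xb.
  have := nG (pickle s); rewrite /Gq fsE => nGs.
  have [j [N hjN]] : exists j N, forall p m, (N <= m)%N -> sparse j (fs p) ->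
      (q.+1 * cnt (op_image (existT _ k f) ([set x | A x /\ (x < b)%N] `|` fs p)) m <= m)%N.
    apply: contrapT => H; apply: nGs => j N.
    apply: contrapT => H2; apply: H; exists j, N => p m Nm sp.
    rewrite leqNgt; apply/negP => h; apply: H2; by exists p, m.
  have [N1 hN1] := (ud0P A).1 dA (2^j).-1.
  rewrite prednK ?expn_gt0 // in hN1.
  exists (maxn b N1, N); split; first exact: leq_maxl.
  move=> T hT m Nm.
  have [s' [s'T hs']] := fin_wit (existT _ k f) [set x | A x /\ (x < b)%N] T m.
  apply: leq_trans (leq_mul (leqnn _) hs') _.
  have := hjN (pickle s') m Nm; rewrite fs_pickle; apply.
  move=> m'; case: (ltnP m' N1) => h.
  - rewrite cnt_low ?muln0 // => x /s'T /hT [_ hx].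
    exact: leq_trans (ltnW h) (leq_trans (leq_maxr b N1) hx).
  - apply: leq_trans (hN1 _ h); rewrite leq_mul2l; apply/orP; right.
    by apply: cnt_sub => x /s'T /hT [].
case/choice: step => st hst.
pose a := fun r => iter r (fun b => (st b).1) 0.
have ha r : (a r <= a r.+1)%N by case: (hst (a r)).
pose Nr := fun r => (st (a r)).2.
pose R := (k.+1).*2.
have [m [Nm hm]] := hq0 (\max_(r < R) Nr r).
have hr r : (r < R)%N -> (q.+1 * cnt (op_image (existT _ k f) (Wc A a r)) m <= m)%N.
  move=> rR; have [_ h] := hst (a r).
  have hT : [set x | A x /\ (a r.+1 <= x)%N] `<=` [set x | A x /\ ((st (a r)).1 <= x)%N].
    by move=> x [Ax hx]; split.
  have hNm : ((st (a r)).2 <= m)%N.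
    apply: leq_trans _ Nm.
    exact: (@leq_bigmax _ (fun r : 'I_R => Nr r) (Ordinal rR)).
  have h' := h _ hT m hNm.
  apply: leq_trans _ h'; rewrite leq_mul2l; apply/orP; right.
  apply/cnt_sub/img_sub => x [Ax hx].
  rewrite negb_and -ltnNge -leqNgt in hx.
  by case/orP: hx => hx; [left|right]; split.
have hsum : (q.+1 * \sum_(r < R) cnt (op_image (existT _ k f) (Wc A a r)) m <= R * m)%N.
  rewrite big_distrr /=.
  apply: (@leq_trans (\sum_(r < R) m)%N); last by rewrite sum_nat_const card_ord.
  by apply: leq_sum => r _; apply: hr.
have hkey := @key_sum k f A a R m ha.
rewrite -/IA in hkey.
set S := \sum_(r < R) cnt (op_image (existT _ k f) (Wc A a r)) m in hsum hkey.
set c := cnt IA m in hm hkey.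
have e0 : (k.+1 * c <= S)%N by rewrite /R in hkey; lia.
have e1 : (q.+1 * (k.+1 * c) <= q.+1 * S)%N by rewrite leq_mul2l e0 orbT.
have e2 : (R * m < R * (q0.+1 * c))%N by rewrite ltn_pmul2l // /R double_gt0.
rewrite /R /q in hsum e1 e2.
lia.
Qed.

Theorem mainTheorem2 : O_Borel C_Idens0.
Proof.
have -> : C_Idens0 = ~` [set F | Bad F].
  apply/seteqP; split => F.
  - by move=> hC hB; exact: BadNC hB hC.
  - by move=> nB; exact: NBC.
exact: BorC Bad_Borel.
Qed.
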